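(* Let $N\ge2$. The following rules define an action of the braid-cyclic group $BC_N$ on the set of all trees with $N$ edges labelled bijectively by $0,1,\dots,N-1$ (considered up to label-preserving isomorphism): (1) the generator $u_k$ ($1\le k\le N-1$) affects only the edges labelled $k-1$ and $k$: (a) if these two edges have no common vertex, they exchange their labels (the tree is unchanged); (b) if the edge labelled $k-1$ joins vertices $A$ and $B$ and the edge labelled $k$ joins $A$ and $C$, then the edge $AB$ receives label $k$, the edge $AC$ is erased, and a new edge $BC$ is drawn and labelled $k-1$; (2) the generator $\lambda$ does not change the tree but shifts the edge labels cyclically, $i\mapsto i+1 \pmod N$.
   Context: The braid-cyclic group $BC_N$ is the subgroup of $\mathrm{Aut}(F(s_0,\dots,s_{N-1}))$ ($F$ the free group on $s_0,\dots,s_{N-1}$) generated by $\lambda$ and $u_1,\dots,u_{N-1}$, where $\lambda(s_k)=s_{k+1}$ (indices mod $N$), $u_k(s_{k-1})=s_k$, $u_k(s_k)=s_k^{-1}s_{k-1}s_k$, and $u_k(s_l)=s_l$ for $l\ne k-1,k$. *)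

(* Defs.v *)
From mathcomp Require Import all_boot fingroup perm.
Set Implicit Arguments. Unset Strict Implicit. Unset Printing Implicit Defensive.

(* A word is a sequence of letters (i, b): s_i if b = true, s_i^{-1} if b = false. *)
Definition word (N : nat) := seq ('I_N * bool).

Definition reduce N (w : word N) : word N :=
  foldr (fun x acc => match acc with
                      | y :: t => if (y.1 == x.1) && (y.2 != x.2) then t else x :: acc
                      | [::] => [:: x]
                      end) [::] w.

Definition winv N (w : word N) : word N := rev (map (fun x => (x.1, ~~ x.2)) w).

Definition endo (N : nat) := {ffun 'I_N -> word N}.

Definition subst N (f : endo N) (w : word N) : word N :=
  reduce (flatten (map (fun x => if x.2 then f x.1 else winv (f x.1)) w)).

Definition ecomp N (f g : endo N) : endo N := [ffun i => subst f (g i)].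

Definition idE N : endo N := [ffun i => [:: (i, true)]].

Definition lamE N : endo N := [ffun i => [:: (ordS i, true)]].

(* u_k, for k : 'I_N with 1 <= k; ord_pred k is k-1 *)
Definition uE N (k : 'I_N) : endo N :=
  [ffun i => if i == k then [:: (k, false); (ord_pred k, true); (k, true)]
             else if i == ord_pred k then [:: (k, true)]
             else [:: (i, true)]].

(* BC_N: the subgroup of Aut(F) generated by lambda and u_1..u_{N-1},
   as the closure under composition and inverses *)
Inductive inBC N : endo N -> Prop :=
  | BC_lam : inBC (lamE N)
  | BC_u (k : 'I_N) : 0 < k -> inBC (uE k)
  | BC_comp f g : inBC f -> inBC g -> inBC (ecomp f g)
  | BC_inv f g : inBC f -> ecomp f g = idE N -> ecomp g f = idE N -> inBC g.

(* vertices 'I_N.+1; the edge labelled i joins (t i).1 and (t i).2 *)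
Definition treeRep (N : nat) := {ffun 'I_N -> 'I_N.+1 * 'I_N.+1}.

Definition tadj N (t : treeRep N) : rel 'I_N.+1 :=
  fun x y => [exists i, (t i == (x, y)) || (t i == (y, x))].

(* N edges on N+1 vertices, no loops, connected  <=>  a tree *)
Definition is_tree N (t : treeRep N) : bool :=
  [forall i, (t i).1 != (t i).2] && [forall x, forall y, connect (tadj t) x y].

Definition tree_iso N (t t' : treeRep N) : Prop :=
  exists s : {perm 'I_N.+1}, forall i,
    (t' i == (s (t i).1, s (t i).2)) || (t' i == (s (t i).2, s (t i).1)).

(* rule (2): labels shift i -> i+1 mod N *)
Definition lamT N (t : treeRep N) : treeRep N :=
  [ffun i => t (ord_pred i)].

(* rule (1) for u_k: a = endpoints of edge k-1, c = endpoints of edge k *)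
Definition uT N (k : 'I_N) (t : treeRep N) : treeRep N :=
  let a := t (ord_pred k) in let c := t k in
  let newkm1 :=
    if a.1 == c.1 then (a.2, c.2)          (* A = a.1, B = a.2, C = c.2 *)
    else if a.1 == c.2 then (a.2, c.1)     (* A = a.1, B = a.2, C = c.1 *)
    else if a.2 == c.1 then (a.1, c.2)     (* A = a.2, B = a.1, C = c.2 *)
    else if a.2 == c.2 then (a.1, c.1)     (* A = a.2, B = a.1, C = c.1 *)
    else c                                 (* no common vertex: swap labels *)
  in [ffun i => if i == k then a else if i == ord_pred k then newkm1 else t i].

(* Main.v *)
Require Import Defs.
From mathcomp Require Import all_boot fingroup perm.
Set Implicit Arguments. Unset Strict Implicit. Unset Printing Implicit Defensive.

Section Main.
Variable N : nat.
Local Open Scope group_scope.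

Definition tup := {ffun 'I_N -> {perm 'I_N.+1}}.
Definition gl (P : tup) (x : 'I_N * bool) : {perm 'I_N.+1} :=
  if x.2 then P x.1 else (P x.1)^-1.
Definition evp (P : tup) (w : word N) : {perm 'I_N.+1} :=
  foldr (fun x acc => gl P x * acc) 1 w.
Definition Rf (f : endo N) (P : tup) : tup := [ffun i => evp P (f i)].

Lemma evp_cons P x w : evp P (x :: w) = gl P x * evp P w.
Proof. by []. Qed.

Lemma evp_reduce P w : evp P (reduce w) = evp P w.
Proof.
elim: w => [|x w IH] //=.
rewrite -IH /reduce /=. rewrite -/(reduce w).
case E: (reduce w) => [|y t] //=.
case: ifP => //= /andP[/eqP e1 e2].
rewrite /gl; case: x y e1 e2 {E} => [i b] [j c] /= -> /=.
by case: b; case: c => //= _; rewrite mulgA ?mulVg ?mulgV mul1g.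
Qed.

Lemma evp_cat P a b : evp P (a ++ b) = evp P a * evp P b.
Proof. by elim: a => [|x a IH] /=; rewrite ?mul1g // IH mulgA. Qed.

Lemma evp_rcons P a x : evp P (rcons a x) = evp P a * gl P x.
Proof. by rewrite -cats1 evp_cat /= mulg1. Qed.

Lemma evp_winv P w : evp P (winv w) = (evp P w)^-1.
Proof.
elim: w => [|x w IH]; first by rewrite /= invg1.
rewrite /winv /= rev_cons evp_rcons -/(winv w) IH invMg; congr (_ * _).
by rewrite /gl /=; case: x.2; rewrite ?invgK.
Qed.

Lemma evp_subst P f w : evp P (subst f w) = evp (Rf f P) w.
Proof.
rewrite /subst evp_reduce; elim: w => [|x w IH] //=.
rewrite evp_cat IH; congr (_ * _).
by rewrite /gl ffunE; case: x.2; rewrite ?evp_winv.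
Qed.

Lemma Rf_comp f g P : Rf (ecomp f g) P = Rf g (Rf f P).
Proof. by apply/ffunP => i; rewrite !ffunE evp_subst. Qed.

Lemma Rf_id P : Rf (idE N) P = P.
Proof. by apply/ffunP => i; rewrite !ffunE /= /gl /= mulg1. Qed.


Definition Tt (t : treeRep N) : tup := [ffun i => tperm (t i).1 (t i).2].
Definition TT (P : tup) := [exists t : treeRep N, is_tree t && (P == Tt t)].
Definition conjT (P : tup) (s : {perm 'I_N.+1}) : tup := [ffun i => P i ^ s].

Lemma evp_conj P s w : evp (conjT P s) w = (evp P w) ^ s.
Proof.
elim: w => [|x w IH] /=; first by rewrite conj1g.
by rewrite IH conjMg /gl ffunE; case: x.2; rewrite ?conjVg.
Qed.

Lemma Rf_conj f P s : Rf f (conjT P s) = conjT (Rf f P) s.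
Proof. by apply/ffunP => i; rewrite !ffunE evp_conj. Qed.

Lemma conjT1 P : conjT P 1 = P.
Proof. by apply/ffunP => i; rewrite ffunE conjg1. Qed.

Lemma tperm_eq (x y u v : 'I_N.+1) : u != v -> tperm x y = tperm u v ->
  (x, y) = (u, v) \/ (x, y) = (v, u).
Proof.
move=> nuv E.
have Hu : tperm x y u = v by rewrite E tpermL.
have Hy : tperm x y v = u by rewrite E tpermR.
have [ex|nx] := eqVneq x u.
  by subst x; left; rewrite -Hu tpermL.
have [ey|ny] := eqVneq y u.
  by subst y; right; rewrite -Hu tpermR.
by move: Hu; rewrite tpermD // => e; move: nuv; rewrite e eqxx.
Qed.

Lemma iso_of_T (a b : treeRep N) s : (forall i, (b i).1 != (b i).2) ->
  Tt b = conjT (Tt a) s -> tree_iso a b.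
Proof.
move=> lb E; exists s => i.
have := congr1 (fun P : tup => P i) E; rewrite !ffunE tpermJ => /esym.
case/(tperm_eq (lb i)) => -[-> ->]; rewrite -surjective_pairing eqxx ?orbT //.
Qed.

Lemma T_of_iso (a b : treeRep N) : tree_iso a b -> exists s, Tt b = conjT (Tt a) s.
Proof.
case=> s H; exists s; apply/ffunP => i; rewrite !ffunE tpermJ.
by case/orP: (H i) => /eqP ->; rewrite // tpermC.
Qed.

Lemma tadj_sym (t : treeRep N) : symmetric (tadj t).
Proof.
move=> x y; apply/existsP/existsP => -[i Hi]; exists i; by rewrite orbC.
Qed.

Lemma edge_connect (t : treeRep N) i : connect (tadj t) (t i).1 (t i).2.
Proof. by apply: connect1; apply/existsP; exists i; rewrite -surjective_pairing eqxx. Qed.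

Lemma tree_of_edges (t t' : treeRep N) : is_tree t ->
  (forall i, (t' i).1 != (t' i).2) ->
  (forall i, connect (tadj t') (t i).1 (t i).2) -> is_tree t'.
Proof.
case/andP=> _ /forallP Hc l Hi; apply/andP; split; first by apply/forallP.
apply/forallP => x; apply/forallP => y.
apply: (connect_sub _ (forallP (Hc x) y)) => u v /existsP[i /orP[] /eqP E].
  by have := Hi i; rewrite E.
by rewrite (sym_connect_sym (@tadj_sym t')); have := Hi i; rewrite E.
Qed.

Definition mapT (s : {perm 'I_N.+1}) (t : treeRep N) : treeRep N :=
  [ffun i => (s (t i).1, s (t i).2)].

Lemma mapT_T s t : Tt (mapT s t) = conjT (Tt t) s.
Proof. by apply/ffunP => i; rewrite !ffunE tpermJ. Qed.

Lemma mapT_tree s t : is_tree t -> is_tree (mapT s t).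
Proof.
move=> Ht; apply/andP; split.
  apply/forallP => i; rewrite ffunE /=; rewrite (inj_eq perm_inj).
  by case/andP: Ht => /forallP.
apply/forallP => x; apply/forallP => y.
case/andP: Ht => _ /forallP Hc.
suff H : forall u v, connect (tadj t) u v -> connect (tadj (mapT s t)) (s u) (s v).
  by have := H _ _ (forallP (Hc (s^-1 x)) (s^-1 y)); rewrite !permKV.
move=> u v /connectP[p Hp ->].
elim: p u Hp => [|z p IH] w /=; first by rewrite connect0.
case/andP => H1 H2; apply: connect_trans (IH _ H2).
apply: connect1; case/existsP: H1 => i Hi; apply/existsP; exists i.
by rewrite ffunE /=; case/orP: Hi => /eqP ->; rewrite eqxx ?orbT.
Qed.


Lemma cross_edge (T : finType) (e : rel T) (S : {set T}) x y :
  connect e x y -> x \in S -> y \notin S -> exists u v, [&& e u v, u \in S & v \notin S].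
Proof.
move=> /connectP[p Hp ->]; elim: p x Hp => [|z p IH] w /=.
  by move=> _ ->.
case/andP => Hw Hp wS; case zS: (z \in S).
  exact: IH.
by move=> _; exists w, z; rewrite Hw wS zS.
Qed.

Lemma count_edges (T : finType) m (D : {set 'I_m}) (g : 'I_m -> T * T) :
  (forall x y, connect (fun x y => [exists i in D, (g i == (x, y)) || (g i == (y, x))]) x y) ->
  #|T| <= #|D|.+1.
Proof.
move=> Hc.
case: (posnP #|T|) => [->//|T0].
suff H : forall j, j < #|T| -> exists (S : {set T}) (E : {set 'I_m}),
   [/\ #|S| = j.+1, E \subset D, #|E| = j & forall i, i \in E -> ((g i).1 \in S) && ((g i).2 \in S)].
  have [S [E [_ ED EC _]]] := H #|T|.-1 (ltac:(by rewrite prednK)).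
  by rewrite -(prednK T0) ltnS -EC subset_leq_card.
elim => [|j IH] jlt.
  have [x _] : exists x : T, true.
    by move: T0; rewrite -cardsT card_gt0 => /set0Pn[x _]; exists x.
  exists [set x], set0; split; [exact: cards1 | exact: sub0set | exact: cards0 | by move=> i; rewrite in_set0].
have [S [E [SC ED EC EI]]] := IH (ltnW jlt).
have [y yS] : exists y, y \notin S.
  apply/existsP; apply: contraTT jlt; rewrite negb_exists => /forallP H.
  rewrite -leqNgt -SC -cardsT subset_leq_card //; apply/subsetP => z _.
  by have := H z; rewrite negbK.
have [x xS] : exists x, x \in S by apply/set0Pn; rewrite -card_gt0 SC.
have [u [v /and3P[/existsP[i /andP[iD Hi]] uS vS]]] := cross_edge (Hc x y) xS yS.
have iE : i \notin E.
  apply/negP => /EI; case/orP: Hi => /eqP -> /=; rewrite (negbTE vS) ?andbF //.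
exists (v |: S), (i |: E); split.
- by rewrite cardsU1 vS SC.
- by rewrite subUset sub1set iD ED.
- by rewrite cardsU1 iE EC.
- move=> l; rewrite !inE => /orP[/eqP ->|/EI /andP[a b]]; last by rewrite a b !orbT.
  by case/orP: Hi => /eqP -> /=; rewrite uS eqxx ?orbT.
Qed.

Lemma tree_noparallel (t : treeRep N) i j : is_tree t -> i != j ->
  t j != t i /\ t j != ((t i).2, (t i).1).
Proof.
move=> /andP[_ /forallP Hc] ij.
suff : ~ ((t j == t i) || (t j == ((t i).2, (t i).1))).
  by case: (t j == t i); case: (t j == _).
move=> Hji.
have := @count_edges _ _ [set~ j] t.
have N0 : 0 < N by apply: leq_ltn_trans (ltn_ord j).
rewrite cardsC1 !card_ord prednK // ltnn => Hf; suff : false by []; apply: Hf.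
move=> x y; rewrite -(eq_connect (e := tadj t)) ?(forallP (Hc x) y) //.
move=> u v; rewrite /tadj; apply/existsP/existsP => -[l Hl]; last first.
  by exists l; case/andP: Hl.
case: (eqVneq l j) => [lj|lj]; last by exists l; rewrite !inE lj.
subst l; exists i; rewrite !inE ij /=.
case/orP: Hji => /eqP E; rewrite E in Hl.
  by [].
case: (t i) Hl => a b /=; rewrite !xpair_eqE; by case/orP => /andP[-> ->]; rewrite ?orbT.
Qed.

Lemma inj_onto (T : finType) (h : T -> T) (A : pred T) : injective h ->
  (forall x, A x -> A (h x)) -> forall y, A y -> exists x, A x /\ h x = y.
Proof.
move=> hi hA y Ay.
have sub : h @: [set x | A x] \subset [set x | A x].
  by apply/subsetP => z /imsetP[x]; rewrite !inE => /hA Ax ->.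
have E : h @: [set x | A x] = [set x | A x].
  by apply/eqP; rewrite eqEcard sub (card_imset _ hi) leqnn.
have : y \in h @: [set x | A x] by rewrite E inE.
by case/imsetP => x; rewrite inE => Ax ->; exists x.
Qed.


Definition shiftT (t : treeRep N) : treeRep N := [ffun i => t (ordS i)].

Lemma Rf_lam P : Rf (lamE N) P = [ffun i => P (ordS i)].
Proof. by apply/ffunP => i; rewrite !ffunE /= /gl /= mulg1. Qed.

Lemma lam_inj : injective (Rf (lamE N)).
Proof.
move=> P Q; rewrite !Rf_lam => E; apply/ffunP => i.
by have := congr1 (fun R : tup => R (ord_pred i)) E; rewrite !ffunE ord_predK.
Qed.

Lemma lam_T t : Rf (lamE N) (Tt t) = Tt (shiftT t).
Proof. by rewrite Rf_lam; apply/ffunP => i; rewrite !ffunE. Qed.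

Lemma lam_tree t : is_tree t -> is_tree (shiftT t).
Proof.
move=> Ht; apply: (tree_of_edges Ht).
  by move=> i; rewrite ffunE; case/andP: Ht => /forallP.
by move=> i; have := edge_connect (shiftT t) (ord_pred i); rewrite ffunE ord_predK.
Qed.

Section U.
Variable k : 'I_N.
Hypothesis k0 : 0 < k.
Local Notation kp := (ord_pred k).

Lemma kp_neq : kp != k.
Proof.
apply/eqP => /(congr1 val) /=.
rewrite -(prednK k0) addSn /= modnDr modn_small; last first.
  exact: leq_ltn_trans (leq_pred _) (ltn_ord k).
by move/eqP; rewrite eqn_leq ltnn andbF.
Qed.

Lemma Rf_u P i : Rf (uE k) P i = if i == k then P kp ^ P k else if i == kp then P k else P i.
Proof.
rewrite /uE !ffunE; case: (eqVneq i k) => [e|_] /=; first by subst i; rewrite /gl /= mulg1 conjgE.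
by case: (eqVneq i kp) => _ /=; rewrite /gl /= mulg1.
Qed.

Lemma u_inj : injective (Rf (uE k)).
Proof.
move=> P Q E.
have Ek : P k = Q k.
  by have := congr1 (fun R : tup => R kp) E; rewrite !Rf_u (negbTE kp_neq) eqxx.
apply/ffunP => i.
have := congr1 (fun R : tup => R i) E; rewrite !Rf_u.
case: eqVneq => [->|_]; first by [].
case: eqVneq => [->|_] //.
have := congr1 (fun R : tup => R k) E; rewrite !Rf_u eqxx Ek.
by move/conjg_inj.
Qed.

Definition uTT (t : treeRep N) : treeRep N :=
  [ffun i => if i == k then (tperm (t k).1 (t k).2 (t kp).1, tperm (t k).1 (t k).2 (t kp).2)
             else if i == kp then t k else t i].

Lemma u_T t : Rf (uE k) (Tt t) = Tt (uTT t).
Proof.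
apply/ffunP => i; rewrite Rf_u !ffunE.
case: (eqVneq i k) => [e|ik]; first by subst i; rewrite tpermJ.
by case: (eqVneq i kp) => [e|_] //; subst i.
Qed.

Lemma u_tree t : is_tree t -> is_tree (uTT t).
Proof.
move=> Ht; have Hl : forall i, (t i).1 != (t i).2 by case/andP: Ht => /forallP.
have sym := sym_connect_sym (@tadj_sym (uTT t)).
apply: (tree_of_edges Ht).
  move=> i; rewrite ffunE; case: (eqVneq i k) => _ /=; first by rewrite (inj_eq perm_inj).
  by case: (eqVneq i kp).
have Ekp : uTT t kp = t k by rewrite ffunE (negbTE kp_neq) eqxx.
have Ek : uTT t k = (tperm (t k).1 (t k).2 (t kp).1, tperm (t k).1 (t k).2 (t kp).2)
  by rewrite ffunE eqxx.
have Hs : forall x, connect (tadj (uTT t)) x (tperm (t k).1 (t k).2 x).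
  move=> x; have [e1|n1] := eqVneq x (t k).1.
    by rewrite e1 tpermL; have := edge_connect (uTT t) kp; rewrite Ekp.
  have [e2|n2] := eqVneq x (t k).2.
    by rewrite e2 tpermR sym; have := edge_connect (uTT t) kp; rewrite Ekp.
  by rewrite tpermD // eq_sym.
move=> i; case: (eqVneq i k) => [e|ik]; first subst i.
  by have := edge_connect (uTT t) kp; rewrite Ekp.
case: (eqVneq i kp) => [e|ikp]; first subst i.
  apply: connect_trans (Hs _) _.
  apply: connect_trans _ ; last by rewrite sym; apply: Hs.
  by have := edge_connect (uTT t) k; rewrite Ek.
by have := edge_connect (uTT t) i; rewrite ffunE (negbTE ik) (negbTE ikp).
Qed.

Lemma conj_case (a1 a2 c1 c2 : 'I_N.+1) : a1 != a2 -> c1 != c2 ->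
  (c1, c2) != (a1, a2) -> (c1, c2) != (a2, a1) ->
  let n := if a1 == c1 then (a2, c2) else if a1 == c2 then (a2, c1)
           else if a2 == c1 then (a1, c2) else if a2 == c2 then (a1, c1) else (c1, c2) in
  tperm (tperm a1 a2 n.1) (tperm a1 a2 n.2) = tperm c1 c2.
Proof.
move=> na nc p1 p2 n; rewrite {}/n.
have [e|ne] := eqVneq a1 c1.
  subst c1; cbn [fst snd]; rewrite tpermR [tperm a1 a2 c2]tpermD //.
  by apply: contraNneq p1 => ->.
have [e2|ne2] := eqVneq a1 c2.
  subst c2; cbn [fst snd]; rewrite tpermR [tperm a1 a2 c1]tpermD 1?tpermC // 1?eq_sym //.
  by apply: contraNneq p2 => ->.
have [e3|ne3] := eqVneq a2 c1.
  subst c1; cbn [fst snd]; rewrite tpermL [tperm a1 a2 c2]tpermD //.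
have [e4|ne4] := eqVneq a2 c2.
  subst c2; cbn [fst snd]; rewrite tpermL [tperm a1 a2 c1]tpermD 1?tpermC // eq_sym //.
cbn [fst snd].
by rewrite [tperm a1 a2 c1]tpermD // [tperm a1 a2 c2]tpermD.
Qed.

Lemma u_uT t : is_tree t -> Rf (uE k) (Tt (uT k t)) = Tt t.
Proof.
move=> Ht; have Hl : forall i, (t i).1 != (t i).2 by case/andP: Ht => /forallP.
have [p1 p2] := tree_noparallel Ht kp_neq.
apply/ffunP => i; rewrite Rf_u.
case: (eqVneq i k) => [e|ik]; first subst i.
  rewrite !ffunE eqxx (negbTE kp_neq) eqxx tpermJ /=.
  move: (Hl k) (Hl kp) p1 p2; rewrite {1 2}(surjective_pairing (t k)) {1 2}(surjective_pairing (t kp)).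
  move: (t k) (t kp) => [c1 c2] [a1 a2] /= nc na p1 p2.
  exact: conj_case.
case: (eqVneq i kp) => [e|ikp]; first by subst i; rewrite !ffunE eqxx.
by rewrite !ffunE (negbTE ik) (negbTE ikp).
Qed.

End U.


Definition Good f := injective (Rf f) /\ (forall P, TT P -> TT (Rf f P)).

Lemma TT_T (t : treeRep N) : is_tree t -> TT (Tt t).
Proof. by move=> Ht; apply/existsP; exists t; rewrite Ht eqxx. Qed.

Lemma TTP (P : tup) : TT P -> exists t, is_tree t /\ P = Tt t.
Proof. by case/existsP => t /andP[Ht /eqP ->]; exists t. Qed.

Lemma BC_good (f : endo N) : inBC f -> Good f.
Proof.
elim => {f}.
- split; first exact: lam_inj.
  by move=> P /TTP[t [Ht ->]]; rewrite lam_T; apply/TT_T/lam_tree.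
- move=> k k0; split; first exact: u_inj.
  by move=> P /TTP[t [Ht ->]]; rewrite u_T //; apply/TT_T/u_tree.
- move=> f g _ [fi fT] _ [gi gT]; split.
    by move=> P Q; rewrite !Rf_comp => /gi /fi.
  by move=> P HP; rewrite Rf_comp; apply/gT/fT.
- move=> f g _ [fi fT] E1 E2.
  have K1 : forall P, Rf g (Rf f P) = P by move=> P; rewrite -Rf_comp E1 Rf_id.
  have K2 : forall P, Rf f (Rf g P) = P by move=> P; rewrite -Rf_comp E2 Rf_id.
  split; first exact: can_inj K2.
  move=> P HP; have [Q [HQ <-]] := inj_onto fi fT HP.
  by rewrite K1.
Qed.

Definition rho (f : endo N) (t : treeRep N) : treeRep N :=
  if [pick t' | is_tree t' && (Rf f (Tt t') == Tt t)] is Some t' then t' else t.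

Lemma rhoP (f : endo N) (t : treeRep N) : Good f -> TT (Tt t) -> is_tree (rho f t) /\ Rf f (Tt (rho f t)) = Tt t.
Proof.
move=> [fi fT] HT; rewrite /rho; case: pickP => [t' /andP[H1 /eqP H2] // | H].
have [Q [HQ E]] := inj_onto fi fT HT.
have [t' [Ht' EQ]] := TTP HQ.
by have := H t'; rewrite Ht' -EQ E eqxx.
Qed.

Lemma tree_ll (t : treeRep N) : is_tree t -> forall i, (t i).1 != (t i).2.
Proof. by case/andP => /forallP. Qed.

Lemma ll_T (a b : treeRep N) : Tt b = Tt a -> (forall i, (a i).1 != (a i).2) -> forall i, (b i).1 != (b i).2.
Proof.
move=> E la i; apply/negP => /eqP e.
have := congr1 (fun P : tup => P i) E; rewrite !ffunE e tperm1 => /(congr1 (fun s : {perm 'I_N.+1} => s (a i).1)).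
by rewrite perm1 tpermL => e2; have := la i; rewrite -e2 eqxx.
Qed.

Lemma Good_id : Good (idE N).
Proof. by split; [move=> P Q; rewrite !Rf_id | move=> P; rewrite Rf_id]. Qed.

End Main.

Theorem mainTheorem10 (N : nat) (hN : 2 <= N) :
  exists rho : endo N -> treeRep N -> treeRep N,
    (forall f t, inBC f -> is_tree t -> is_tree (rho f t)) /\
    (forall f t t', inBC f -> is_tree t -> tree_iso t t' ->
        tree_iso (rho f t) (rho f t')) /\
    (forall t, is_tree t -> tree_iso (rho (idE N) t) t) /\
    (forall f g t, inBC f -> inBC g -> is_tree t ->
        tree_iso (rho (ecomp f g) t) (rho f (rho g t))) /\
    (forall t, is_tree t -> tree_iso (rho (lamE N) t) (lamT t)) /\
    (forall (k : 'I_N) t, 0 < k -> is_tree t -> tree_iso (rho (uE k) t) (uT k t)).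
Proof.
exists (@rho N); split; [|split; [|split; [|split; [|split]]]].
- by move=> f t /BC_good Hf Ht; case: (rhoP Hf (TT_T Ht)).
- move=> f t t' /BC_good Hf Ht Hiso.
  have [s Es] := T_of_iso Hiso.
  have HT' : TT (Tt t') by rewrite Es -mapT_T; apply/TT_T/mapT_tree.
  have [r1 E1] := rhoP Hf (TT_T Ht).
  have [r2 E2] := rhoP Hf HT'.
  apply: (iso_of_T (s := s)); first exact: tree_ll.
  by apply: (proj1 Hf); rewrite Rf_conj E1 E2.
- move=> t Ht; have [r1 E1] := rhoP (@Good_id N) (TT_T Ht).
  apply: (iso_of_T (s := 1)); first exact: tree_ll.
  by rewrite conjT1 -E1 Rf_id.
- move=> f g t hf hg Ht.
  have Hfg := BC_good (BC_comp hf hg).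
  have Hf := BC_good hf; have Hg := BC_good hg.
  have [_ E] := rhoP Hfg (TT_T Ht); rewrite Rf_comp in E.
  have [r1t E1] := rhoP Hg (TT_T Ht).
  have [r2t E2] := rhoP Hf (TT_T r1t).
  apply: (iso_of_T (s := 1)); first exact: tree_ll r2t.
  rewrite conjT1; apply: (proj1 Hf); apply: (proj1 Hg); by rewrite E2 E1 E.
- move=> t Ht; have H := BC_good (@BC_lam N).
  have [_ E] := rhoP H (TT_T Ht).
  have E' : Rf (lamE N) (Tt (lamT t)) = Tt t.
    by rewrite Rf_lam; apply/ffunP => i; rewrite !ffunE ordSK.
  apply: (iso_of_T (s := 1)).
    by move=> i; rewrite ffunE; exact: tree_ll Ht _.
  by rewrite conjT1; apply: (proj1 H); rewrite E E'.
- move=> k t k0 Ht; have H := BC_good (BC_u k0).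
  have [rt E] := rhoP H (TT_T Ht).
  have E' := u_uT k0 Ht.
  have ET : Tt (uT k t) = Tt (rho (uE k) t) by apply: (proj1 H); rewrite E E'.
  apply: (iso_of_T (s := 1)).
    exact: ll_T ET (tree_ll rt).
  by rewrite conjT1.
Qed.
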